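(* Let $(X,d)$ be a geodesic length space that is a proper metric space, $I\subseteq\mathbb{R}$ an open interval and $f:I\to(0,\infty)$ continuous. Then the generalized cone $I\times_f X$ is globally hyperbolic.
   Context: $Y=I\times_f X$ is the set $I\times X$ with metric $D((t,x),(t',x'))=|t-t'|+d(x,x')$. A curve $\gamma=(\alpha,\beta)$ is causal if $D$-absolutely continuous, $\alpha$ strictly monotone and $-\dot\alpha^2+(f\circ\alpha)^2v_\beta^2\le0$ a.e. ($v_\beta$ the metric derivative of $\beta$), future directed if $\dot\alpha>0$ a.e.; $y\le y'$ iff $y=y'$ or there is a future directed causal curve from $y$ to $y'$. Causal diamonds: $J(p,q)=\{r: p\le r\le q\}$. Global hyperbolicity (for Lorentzian pre-length spaces, in the sense of Kunzinger–Sämann): the space is non-totally imprisoning (for every compact set $K$ there is $C>0$ such that the $D$-length of every causal curve contained in $K$ is at most $C$) and $J(p,q)$ is compact for all $p,q$. *)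

(* Defs.v *)
From Stdlib Require Import Reals Lra List.
From Coquelicot Require Import Rbar.
Open Scope R_scope.

Fixpoint psum (g : nat -> R) (n : nat) : R :=
  match n with O => 0 | S k => psum g k + g k end.

Definition is_metric {X : Type} (d : X -> X -> R) : Prop :=
  (forall x y, 0 <= d x y) /\ (forall x y, d x y = 0 <-> x = y) /\
  (forall x y, d x y = d y x) /\ (forall x y z, d x z <= d x y + d y z).

Definition open_set {T : Type} (dist : T -> T -> R) (U : T -> Prop) : Prop :=
  forall x, U x -> exists r, 0 < r /\ forall y, dist x y < r -> U y.

Definition compact_set {T : Type} (dist : T -> T -> R) (K : T -> Prop) : Prop :=
  forall (Idx : Type) (U : Idx -> T -> Prop),
    (forall i, open_set dist (U i)) ->
    (forall x, K x -> exists i, U i x) ->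
    exists l : list Idx, forall x, K x -> exists i, In i l /\ U i x.

Definition proper_metric {X : Type} (d : X -> X -> R) : Prop :=
  forall x r, compact_set d (fun y => d x y <= r).

Definition is_partition (a b : R) (n : nat) (t : nat -> R) : Prop :=
  t O = a /\ t n = b /\ forall i, (i < n)%nat -> t i <= t (S i).

Definition partition_sum {T : Type} (dist : T -> T -> R) (g : R -> T)
  (n : nat) (t : nat -> R) : R :=
  psum (fun i => dist (g (t i)) (g (t (S i)))) n.

Definition length_le {T : Type} (dist : T -> T -> R) (g : R -> T) (a b C : R) : Prop :=
  forall n t, is_partition a b n t -> partition_sum dist g n t <= C.

Definition has_length {T : Type} (dist : T -> T -> R) (g : R -> T) (a b L : R) : Prop :=
  is_lub (fun s => exists n t, is_partition a b n t /\ s = partition_sum dist g n t) L.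

Definition continuous_on_int {T : Type} (dist : T -> T -> R) (g : R -> T) (a b : R) : Prop :=
  forall s, a <= s <= b -> forall eps, 0 < eps -> exists delta, 0 < delta /\
    forall s', a <= s' <= b -> Rabs (s' - s) < delta -> dist (g s') (g s) < eps.

Definition is_length_space {X : Type} (d : X -> X -> R) : Prop :=
  forall x y,
    (forall (g : R -> X) L, continuous_on_int d g 0 1 -> g 0 = x -> g 1 = y ->
        has_length d g 0 1 L -> d x y <= L) /\
    (forall eps, 0 < eps -> exists (g : R -> X) L, continuous_on_int d g 0 1 /\
        g 0 = x /\ g 1 = y /\ has_length d g 0 1 L /\ L < d x y + eps).

Definition is_geodesic_space {X : Type} (d : X -> X -> R) : Prop :=
  forall x y, exists g : R -> X, continuous_on_int d g 0 1 /\
    g 0 = x /\ g 1 = y /\ has_length d g 0 1 (d x y).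

Definition negligible (N : R -> Prop) : Prop :=
  forall eps, 0 < eps -> exists l u : nat -> R,
    (forall k, l k <= u k) /\
    (forall x, N x -> exists k, l k < x < u k) /\
    (forall n, psum (fun k => u k - l k) n < eps).

Definition ae_on (a b : R) (P : R -> Prop) : Prop :=
  exists N, negligible N /\ forall t, a <= t <= b -> ~ N t -> P t.

Definition in_I (lo hi : Rbar) (t : R) : Prop :=
  Rbar_lt lo (Finite t) /\ Rbar_lt (Finite t) hi.

Definition in_Y {X : Type} (lo hi : Rbar) (y : R * X) : Prop := in_I lo hi (fst y).

Definition cone_dist {X : Type} (d : X -> X -> R) (y y' : R * X) : R :=
  Rabs (fst y - fst y') + d (snd y) (snd y').

Definition abs_cont {T : Type} (dist : T -> T -> R) (g : R -> T) (a b : R) : Prop :=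
  forall eps, 0 < eps -> exists delta, 0 < delta /\
    forall n (s t : nat -> R),
      (forall i, (i < n)%nat -> a <= s i /\ s i <= t i /\ t i <= b) ->
      (forall i, (S i < n)%nat -> t i <= s (S i)) ->
      psum (fun i => t i - s i) n < delta ->
      psum (fun i => dist (g (s i)) (g (t i))) n < eps.

Definition has_deriv_on (h : R -> R) (a b t l : R) : Prop :=
  forall eps, 0 < eps -> exists delta, 0 < delta /\
    forall s, a <= s <= b -> s <> t -> Rabs (s - t) < delta ->
      Rabs ((h s - h t) / (s - t) - l) < eps.

Definition has_metric_deriv {X : Type} (d : X -> X -> R) (g : R -> X) (a b t v : R) : Prop :=
  forall eps, 0 < eps -> exists delta, 0 < delta /\
    forall s, a <= s <= b -> s <> t -> Rabs (s - t) < delta ->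
      Rabs (d (g s) (g t) / Rabs (s - t) - v) < eps.

Definition causal_curve {X : Type} (d : X -> X -> R) (lo hi : Rbar) (f : R -> R)
  (g : R -> R * X) (a b : R) : Prop :=
  a < b /\
  (forall s, a <= s <= b -> in_Y lo hi (g s)) /\
  abs_cont (cone_dist d) g a b /\
  ((forall s s', a <= s -> s < s' -> s' <= b -> fst (g s) < fst (g s')) \/
   (forall s s', a <= s -> s < s' -> s' <= b -> fst (g s') < fst (g s))) /\
  ae_on a b (fun t => exists da v,
     has_deriv_on (fun s => fst (g s)) a b t da /\
     has_metric_deriv d (fun s => snd (g s)) a b t v /\
     - da ^ 2 + (f (fst (g t))) ^ 2 * v ^ 2 <= 0).

Definition future_directed {X : Type} (d : X -> X -> R) (lo hi : Rbar) (f : R -> R)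
  (g : R -> R * X) (a b : R) : Prop :=
  causal_curve d lo hi f g a b /\
  ae_on a b (fun t => exists da, has_deriv_on (fun s => fst (g s)) a b t da /\ 0 < da).

Definition causal_le {X : Type} (d : X -> X -> R) (lo hi : Rbar) (f : R -> R)
  (y y' : R * X) : Prop :=
  y = y' \/ exists (g : R -> R * X) a b,
    future_directed d lo hi f g a b /\ g a = y /\ g b = y'.

Definition diamond {X : Type} (d : X -> X -> R) (lo hi : Rbar) (f : R -> R)
  (p q : R * X) (r : R * X) : Prop :=
  in_Y lo hi r /\ causal_le d lo hi f p r /\ causal_le d lo hi f r q.

Definition non_totally_imprisoning {X : Type} (d : X -> X -> R) (lo hi : Rbar)
  (f : R -> R) : Prop :=
  forall K : R * X -> Prop,
    (forall y, K y -> in_Y lo hi y) -> compact_set (cone_dist d) K ->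
    exists C, 0 < C /\ forall (g : R -> R * X) a b,
      causal_curve d lo hi f g a b -> (forall s, a <= s <= b -> K (g s)) ->
      length_le (cone_dist d) g a b C.

Definition globally_hyperbolic {X : Type} (d : X -> X -> R) (lo hi : Rbar)
  (f : R -> R) : Prop :=
  non_totally_imprisoning d lo hi f /\
  forall p q, in_Y lo hi p -> in_Y lo hi q ->
    compact_set (cone_dist d) (diamond d lo hi f p q).

(* Main.v *)
Require Import Defs.
From Stdlib Require Import Reals Lra Lia List Classical ClassicalEpsilon.
From Coquelicot Require Import Rbar.
Import Defs.
Open Scope R_scope.

Definition pc := ((R*R)*nat)%type.
Definition ps (p : pc) : R := fst (fst p).
Definition pt (p : pc) : R := snd (fst p).
Definition pk (p : pc) : nat := snd p.
Definition plen (p : pc) : R := pt p - ps p.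

Fixpoint chain (x : R) (l : list pc) : Prop :=
  match l with nil => True | p :: l' => x <= ps p /\ ps p <= pt p /\ chain (pt p) l' end.

Fixpoint lsum (h : pc -> R) (l : list pc) : R :=
  match l with nil => 0 | p :: l' => h p + lsum h l' end.

Lemma lsum_app h l1 l2 : lsum h (l1 ++ l2) = lsum h l1 + lsum h l2.
Proof. induction l1; simpl; lra. Qed.

Lemma chain_mono x y l : chain y l -> x <= y -> chain x l.
Proof. destruct l; simpl; auto. intros [? ?] ?; split; [lra|auto]. Qed.

Lemma chain_app u v l1 l2 : u <= v -> chain u l1 -> chain v l2 ->
  (forall p, In p l1 -> pt p <= v) -> chain u (l1 ++ l2).
Proof.
  revert u; induction l1 as [|p l1 IH]; intros u Huv H1 H2 H3; simpl in *.
  - apply chain_mono with v; auto.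
  - destruct H1 as [? [? ?]]. split; [auto|split;[auto|]].
    apply IH; auto.
Qed.

Lemma chain_filter (P : pc -> bool) x l : chain x l -> chain x (filter P l).
Proof.
  revert x; induction l as [|p l IH]; intros x H; simpl in *; auto.
  destruct H as [? [? ?]]. destruct (P p); simpl.
  - split; [auto|split;[auto|]]. apply IH; auto.
  - apply chain_mono with (pt p); [apply IH; auto|lra].
Qed.

Lemma chain_lower L x l : chain x l -> (forall p, In p l -> L <= ps p) -> chain L l.
Proof.
  destruct l as [|p l]; simpl; auto. intros [? [? ?]] HL; split; auto.
Qed.

Lemma chain_sum x U l : chain x l -> (forall p, In p l -> pt p <= U) -> x <= U ->
  lsum plen l <= U - x.
Proof.
  revert x; induction l as [|p l IH]; intros x H HU Hx; simpl in *. lra.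
  destruct H as [? [? ?]]. unfold plen at 1.
  assert (pt p <= U) by (apply HU; auto).
  assert (lsum plen l <= U - pt p) by (apply IH; auto).
  lra.
Qed.

Lemma lsum_filter h (P : pc -> bool) l :
  lsum h l = lsum h (filter P l) + lsum h (filter (fun p => negb (P p)) l).
Proof. induction l as [|p l IH]; simpl. lra. destruct (P p); simpl; lra. Qed.

Lemma grouping (lo up : nat -> R) : (forall k, lo k <= up k) ->
  forall K l x, chain x l ->
  (forall p, In p l -> (pk p < K)%nat /\ lo (pk p) <= ps p /\ pt p <= up (pk p)) ->
  lsum plen l <= psum (fun k => up k - lo k) K.
Proof.
  intros Hlu K; induction K as [|K IH]; intros l x Hc Hl.
  - destruct l as [|p l]; simpl. lra. destruct (Hl p (or_introl eq_refl)) as [H _]; lia.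
  - rewrite (lsum_filter plen (fun p => Nat.eqb (pk p) K)). simpl psum.
    assert (H1 : lsum plen (filter (fun p => Nat.eqb (pk p) K) l) <= up K - lo K).
    { apply chain_sum with (x := lo K).
      - apply chain_lower with x. apply chain_filter; auto.
        intros p Hp. apply filter_In in Hp. destruct Hp as [Hp Hk].
        apply Nat.eqb_eq in Hk. destruct (Hl p Hp) as [_ [? _]]. rewrite <- Hk; auto.
      - intros p Hp. apply filter_In in Hp. destruct Hp as [Hp Hk].
        apply Nat.eqb_eq in Hk. destruct (Hl p Hp) as [_ [_ ?]]. rewrite <- Hk; auto.
      - auto. }
    assert (H2 : lsum plen (filter (fun p => negb (Nat.eqb (pk p) K)) l) <= psum (fun k => up k - lo k) K).
    { apply IH with x. apply chain_filter; auto.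
      intros p Hp. apply filter_In in Hp. destruct Hp as [Hp Hk].
      destruct (Hl p Hp) as [? [? ?]]. split; auto.
      destruct (Nat.eqb (pk p) K) eqn:E; simpl in Hk; [discriminate|].
      apply Nat.eqb_neq in E. lia. }
    lra.
Qed.

Lemma psum_shift g n : psum g (S n) = g O + psum (fun i => g (S i)) n.
Proof. induction n; simpl in *. lra. rewrite IHn. lra. Qed.

Lemma psum_nth h l d : psum (fun i => h (nth i l d)) (length l) = lsum h l.
Proof.
  induction l as [|p l IH]. simpl; lra.
  change (length (p::l)) with (S (length l)). rewrite psum_shift. simpl lsum. simpl nth. rewrite IH. lra.
Qed.

Lemma psum_ext g1 g2 n : (forall i, (i < n)%nat -> g1 i = g2 i) -> psum g1 n = psum g2 n.
Proof. induction n; intros H; simpl. lra. rewrite IHn by (intros; apply H; lia). rewrite H by lia. lra. Qed.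

Lemma psum_le g1 g2 n : (forall i, (i < n)%nat -> g1 i <= g2 i) -> psum g1 n <= psum g2 n.
Proof. induction n; intros H; simpl. lra. assert (g1 n <= g2 n) by (apply H; lia).
  assert (psum g1 n <= psum g2 n) by (apply IHn; intros; apply H; lia). lra. Qed.

Lemma psum_nonneg g n : (forall i, 0 <= g i) -> 0 <= psum g n.
Proof. induction n; intros H; simpl. lra. specialize (IHn H). specialize (H n). lra. Qed.

Lemma real_ind a b (Q : R -> R -> Prop) : a <= b ->
  (forall u v w, a <= u -> u <= v -> v <= w -> w <= b -> Q u v -> Q v w -> Q u w) ->
  (forall x, a <= x <= b -> exists delta, 0 < delta /\
     forall u v, a <= u -> u <= x -> x <= v -> v <= b -> v - u < delta -> Q u v) ->
  Q a b.
Proof.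
  intros Hab Hadd Hloc.
  assert (Qaa : Q a a).
  { destruct (Hloc a (conj (Rle_refl a) Hab)) as [d [Hd Hq]]. apply Hq; lra. }
  set (E := fun x => a <= x <= b /\ Q a x).
  assert (Hb : bound E) by (exists b; intros x [[? ?] ?]; auto).
  assert (He : exists x, E x) by (exists a; split; [lra|auto]).
  destruct (completeness E Hb He) as [s [Hs1 Hs2]].
  assert (Has : a <= s) by (apply Hs1; split; [lra|auto]).
  assert (Hsb : s <= b) by (apply Hs2; intros x [[? ?] ?]; auto).
  destruct (Hloc s (conj Has Hsb)) as [d [Hd Hq]].
  assert (Hx : exists x, E x /\ s - d/2 < x).
  { apply NNPP; intro Hn.
    assert (s <= s - d/2); [|lra].
    apply Hs2. intros x Ex. apply Rnot_lt_le. intro Hlt. apply Hn. exists x; auto. }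
  destruct Hx as [x [[[Hax Hxb] HQx] Hxs]].
  assert (Hxs' : x <= s) by (apply Hs1; split; [lra|auto]).
  set (s' := Rmin b (s + d/2)).
  assert (Hs'1 : s' <= b) by apply Rmin_l.
  assert (Hs'2 : s' <= s + d/2) by apply Rmin_r.
  assert (Hs'3 : s <= s') by (apply Rmin_glb; lra).
  assert (HQ : Q a s').
  { apply Hadd with x; try lra; auto. apply Hq; lra. }
  assert (Hle : s' <= s) by (apply Hs1; split; [lra|auto]).
  unfold s', Rmin in *. destruct (Rle_dec b (s + d/2)); [auto|lra].
Qed.

Lemma le_eps z w : 0 <= w -> (forall eps, 0 < eps -> z <= eps * (w + 1)) -> z <= 0.
Proof.
  intros Hw H. apply Rnot_lt_le; intro Hz.
  specialize (H (z / (2 * (w+1)))).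
  assert (0 < z / (2*(w+1))) by (apply Rdiv_lt_0_compat; lra).
  specialize (H H0).
  replace (z / (2 * (w + 1)) * (w + 1)) with (z/2) in H by (field; lra). lra.
Qed.

Definition subadd (a b : R) (Phi : R -> R -> R) : Prop :=
  forall u v w, a <= u -> u <= v -> v <= w -> w <= b -> Phi u w <= Phi u v + Phi v w.

Definition local_bound (a b : R) (Phi : R -> R -> R) (x : R) : Prop :=
  forall eps, 0 < eps -> exists delta, 0 < delta /\
    forall u v, a <= u -> u <= x -> x <= v -> v <= b -> v - u < delta -> Phi u v <= eps * (v - u).

Lemma local_nonpos a b Phi : a <= b -> subadd a b Phi ->
  (forall x, a <= x <= b -> local_bound a b Phi x) -> Phi a b <= 0.
Proof.
  intros Hab Hs Hl. apply le_eps with (b - a); [lra|]. intros eps He.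
  assert (Phi a b <= eps * (b - a)); [|nra].
  apply (real_ind a b (fun u v => Phi u v <= eps * (v - u))); auto.
  - intros u v w ? ? ? ? H1 H2. specialize (Hs u v w). lra.
  - intros x Hx. destruct (Hl x Hx eps He) as [d [Hd Hq]]. exists d; split; auto.
Qed.

Lemma list_bound (l : list pc) : exists K, forall p, In p l -> (pk p < K)%nat.
Proof.
  induction l as [|p l [K HK]]. exists O; intros p [].
  exists (S (Nat.max K (pk p))). intros q [<-|Hq]. lia. specialize (HK q Hq). lia.
Qed.

Definition HACprop (a b : R) (Phi : R -> R -> R) : Prop :=
  forall eps, 0 < eps -> exists delta, 0 < delta /\ forall l, chain a l ->
    (forall p, In p l -> pt p <= b) -> lsum plen l < delta ->
    lsum (fun p => Phi (ps p) (pt p)) l < eps.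

Lemma key a b (Phi : R -> R -> R) (N : R -> Prop) : a <= b -> subadd a b Phi ->
  negligible N ->
  (forall x, a <= x <= b -> ~ N x -> local_bound a b Phi x) ->
  HACprop a b Phi -> Phi a b <= 0.
Proof.
  intros Hab Hs HN Hl HAC. apply le_eps with (b - a); [lra|]. intros eps He.
  destruct (HAC eps He) as [d [Hd Hd']].
  destruct (HN d Hd) as [lo [up [Hlu [Hcov Hsum]]]].
  set (Phi' := fun p : pc => Phi (ps p) (pt p)).
  assert (HQ : exists l, chain a l /\ (forall p, In p l -> pt p <= b) /\
     (forall p, In p l -> lo (pk p) <= ps p /\ pt p <= up (pk p)) /\
     Phi a b <= eps * (b - a) + lsum Phi' l).
  { apply (real_ind a b (fun u v => exists l, chain u l /\ (forall p, In p l -> pt p <= v) /\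
     (forall p, In p l -> lo (pk p) <= ps p /\ pt p <= up (pk p)) /\
     Phi u v <= eps * (v - u) + lsum Phi' l)); auto.
    - intros u v w ? ? ? ? [l1 [C1 [T1 [L1 P1]]]] [l2 [C2 [T2 [L2 P2]]]].
      exists (l1 ++ l2). split; [apply chain_app with v; auto|].
      split. { intros p Hp. apply in_app_or in Hp. destruct Hp as [Hp|Hp].
               specialize (T1 p Hp); lra. auto. }
      split. { intros p Hp. apply in_app_or in Hp. destruct Hp as [Hp|Hp]; auto. }
      rewrite lsum_app. specialize (Hs u v w). lra.
    - intros x Hx. destruct (classic (N x)) as [Nx|Nx].
      + destruct (Hcov x Nx) as [k Hk].
        exists (Rmin (x - lo k) (up k - x)). split. apply Rmin_glb_lt; lra.
        intros u v ? ? ? ? Hd2.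
        assert (Hm1 := Rmin_l (x - lo k) (up k - x)).
        assert (Hm2 := Rmin_r (x - lo k) (up k - x)).
        exists (((u, v), k) :: nil). simpl. unfold ps, pt, pk; simpl.
        split. lra. split. intros p [<-|[]]; unfold pt; simpl; lra.
        split. intros p [<-|[]]; unfold pt, ps, pk; simpl; lra.
        unfold Phi', ps, pt; simpl. nra.
      + destruct (Hl x Hx Nx eps He) as [d2 [Hd2 Hq]]. exists d2; split; auto.
        intros u v ? ? ? ? ?. exists nil. simpl. split; auto. split. intros p []. split. intros p [].
        specialize (Hq u v). lra. }
  destruct HQ as [l [C [T [L P]]]].
  destruct (list_bound l) as [K HK].
  assert (lsum plen l <= psum (fun k => up k - lo k) K).
  { apply grouping with a; auto. }
  specialize (Hsum K).
  assert (lsum Phi' l < eps) by (apply Hd'; auto; lra).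
  lra.
Qed.

Lemma psum_mono g n m : (forall i, 0 <= g i) -> (n <= m)%nat -> psum g n <= psum g m.
Proof.
  intros Hg Hnm. induction Hnm. lra. simpl. specialize (Hg m). lra.
Qed.

Lemma psum_interleave g m :
  psum g (2 * m) = psum (fun i => g (2 * i)%nat) m + psum (fun i => g (2 * i + 1)%nat) m.
Proof.
  induction m. simpl. lra.
  replace (2 * S m)%nat with (S (S (2 * m))) by lia.
  change (psum g (S (S (2*m)))) with (psum g (2*m) + g (2*m)%nat + g (S (2*m))).
  rewrite IHm.
  change (psum (fun i => g (2 * i)%nat) (S m)) with (psum (fun i => g (2 * i)%nat) m + g (2*m)%nat).
  change (psum (fun i => g (2 * i + 1)%nat) (S m)) with (psum (fun i => g (2 * i + 1)%nat) m + g (2*m+1)%nat).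
  replace (S (2 * m)) with (2 * m + 1)%nat by lia. lra.
Qed.

Lemma negligible_union N1 N2 : negligible N1 -> negligible N2 ->
  negligible (fun x => N1 x \/ N2 x).
Proof.
  intros H1 H2 eps He.
  destruct (H1 (eps/2) ltac:(lra)) as [l1 [u1 [Hlu1 [Hc1 Hs1]]]].
  destruct (H2 (eps/2) ltac:(lra)) as [l2 [u2 [Hlu2 [Hc2 Hs2]]]].
  exists (fun k => if Nat.even k then l1 (Nat.div2 k) else l2 (Nat.div2 k)).
  exists (fun k => if Nat.even k then u1 (Nat.div2 k) else u2 (Nat.div2 k)).
  assert (Ev : forall i, Nat.even (2 * i) = true) by (intro i; rewrite Nat.even_mul; reflexivity).
  assert (Od : forall i, Nat.even (2 * i + 1) = false)
    by (intro i; rewrite Nat.even_add, Ev; reflexivity).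
  assert (D1 : forall i, Nat.div2 (2 * i) = i) by (intro i; apply Nat.div2_double).
  assert (D2 : forall i, Nat.div2 (2 * i + 1) = i)
    by (intro i; replace (2 * i + 1)%nat with (S (2 * i)) by lia; apply Nat.div2_succ_double).
  split; [|split].
  - intro k. destruct (Nat.even k); auto.
  - intros x [Hx|Hx].
    + destruct (Hc1 x Hx) as [k Hk]. exists (2 * k)%nat. rewrite Ev, D1. auto.
    + destruct (Hc2 x Hx) as [k Hk]. exists (2 * k + 1)%nat. rewrite Od, D2. auto.
  - intro n.
    eapply Rle_lt_trans. apply psum_mono with (m := (2 * n)%nat).
    { intro k. destruct (Nat.even k); [specialize (Hlu1 (Nat.div2 k))|specialize (Hlu2 (Nat.div2 k))]; lra. }
    lia.
    rewrite psum_interleave.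
    rewrite (psum_ext _ (fun i => u1 i - l1 i)) by (intros i _; rewrite Ev, D1; reflexivity).
    assert (E2: psum (fun i => (if Nat.even (2 * i + 1) then u1 (Nat.div2 (2 * i + 1)) else u2 (Nat.div2 (2 * i + 1))) - (if Nat.even (2 * i + 1) then l1 (Nat.div2 (2 * i + 1)) else l2 (Nat.div2 (2 * i + 1)))) n = psum (fun i => u2 i - l2 i) n)
      by (apply psum_ext; intros i _; rewrite Od, D2; reflexivity).
    rewrite E2.
    specialize (Hs1 n); specialize (Hs2 n). lra.
Qed.

Lemma lsum_ext h1 h2 l : (forall p, In p l -> h1 p = h2 p) -> lsum h1 l = lsum h2 l.
Proof. induction l; simpl; intros H. auto. rewrite H by auto. rewrite IHl by auto. auto. Qed.

Lemma lsum_le h1 h2 l : (forall p, In p l -> h1 p <= h2 p) -> lsum h1 l <= lsum h2 l.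
Proof. induction l; simpl; intros H. lra. assert (h1 a <= h2 a) by auto.
  assert (lsum h1 l <= lsum h2 l) by auto. lra. Qed.

Lemma non_negligible a b N : a < b -> negligible N -> exists x, a <= x <= b /\ ~ N x.
Proof.
  intros Hab HN. apply NNPP; intro Hn.
  assert (HA : forall x, a <= x <= b -> N x).
  { intros x Hx. apply NNPP; intro Hx'. apply Hn. exists x; auto. }
  assert (b - a <= 0); [|lra].
  refine (key a b (fun u v => v - u) N _ _ HN _ _).
  - lra.
  - intros u v w; lra.
  - intros x Hx Nx. exfalso; auto.
  - intros eps He. exists eps; split; auto.
Qed.

Lemma ae_exists a b P : a < b -> ae_on a b P -> exists x, a <= x <= b /\ P x.
Proof.
  intros Hab [N [HN HP]]. destruct (non_negligible a b N Hab HN) as [x [Hx Nx]].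
  exists x; auto.
Qed.

Lemma near_point a b x : a < b -> a <= x <= b -> forall delta, 0 < delta ->
  exists s, a <= s <= b /\ s <> x /\ Rabs (s - x) < delta.
Proof.
  intros Hab Hx d Hd. destruct (Rlt_le_dec x b).
  - exists (x + Rmin d (b - x) / 2).
    assert (H1 := Rmin_l d (b - x)). assert (H2 := Rmin_r d (b - x)).
    assert (0 < Rmin d (b - x)) by (apply Rmin_glb_lt; lra).
    split; [lra|split;[lra|]]. rewrite Rabs_pos_eq; lra.
  - exists (x - Rmin d (x - a) / 2).
    assert (H1 := Rmin_l d (x - a)). assert (H2 := Rmin_r d (x - a)).
    assert (0 < Rmin d (x - a)) by (apply Rmin_glb_lt; lra).
    split; [lra|split;[lra|]]. rewrite Rabs_left; lra.
Qed.

Lemma deriv_unique h a b x l1 l2 : a < b -> a <= x <= b ->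
  has_deriv_on h a b x l1 -> has_deriv_on h a b x l2 -> l1 = l2.
Proof.
  intros Hab Hx H1 H2. apply NNPP; intro Hne.
  assert (He : 0 < Rabs (l1 - l2) / 2) by (assert (0 < Rabs (l1 - l2)) by (apply Rabs_pos_lt; lra); lra).
  destruct (H1 _ He) as [d1 [Hd1 Q1]]. destruct (H2 _ He) as [d2 [Hd2 Q2]].
  destruct (near_point a b x Hab Hx (Rmin d1 d2)) as [s [Hs [Hsx Hsd]]].
  apply Rmin_glb_lt; auto.
  assert (A1 := Rmin_l d1 d2). assert (A2 := Rmin_r d1 d2).
  specialize (Q1 s Hs Hsx ltac:(lra)). specialize (Q2 s Hs Hsx ltac:(lra)).
  set (q := (h s - h x) / (s - x)) in *.
  assert (Rabs (l1 - l2) <= Rabs (q - l1) + Rabs (q - l2)).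
  { replace (l1 - l2) with (-(q - l1) + (q - l2)) by ring.
    eapply Rle_trans. apply Rabs_triang. rewrite Rabs_Ropp. lra. }
  lra.
Qed.

Lemma deriv_pos_not_decr h a b x da : a < b -> a <= x <= b ->
  has_deriv_on h a b x da -> 0 < da ->
  (forall s s', a <= s -> s < s' -> s' <= b -> h s' < h s) -> False.
Proof.
  intros Hab Hx Hd Hda Hdec.
  destruct (Hd da Hda) as [d [Hd0 Q]].
  destruct (near_point a b x Hab Hx d Hd0) as [s [Hs [Hsx Hsd]]].
  specialize (Q s Hs Hsx Hsd).
  set (q := (h s - h x) / (s - x)) in *.
  assert (Hq : q * (s - x) = h s - h x) by (unfold q; field; lra).
  assert (0 < q) by (apply Rabs_def2 in Q; lra).
  destruct (Rlt_le_dec x s).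
  - specialize (Hdec x s ltac:(lra) r ltac:(lra)). nra.
  - assert (s < x) by lra. specialize (Hdec s x ltac:(lra) H0 ltac:(lra)). nra.
Qed.

Lemma chain_nth x l d : chain x l -> forall i, (i < length l)%nat ->
  x <= ps (nth i l d) /\ ps (nth i l d) <= pt (nth i l d) /\
  ((S i < length l)%nat -> pt (nth i l d) <= ps (nth (S i) l d)).
Proof.
  revert x; induction l as [|p l IH]; intros x Hc i Hi; simpl in Hi. lia.
  destruct Hc as [H1 [H2 H3]]. destruct i as [|j].
  - simpl. split; auto. split; auto. intro Hl. destruct l as [|q l]; simpl in *. lia.
    destruct H3; auto.
  - simpl. destruct (IH (pt p) H3 j ltac:(lia)) as [A [B C]].
    split; [lra|split; auto]. intro; apply C; lia.
Qed.

Lemma ac_list {T : Type} (D : T -> T -> R) g a b : abs_cont D g a b ->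
  forall eps, 0 < eps -> exists delta, 0 < delta /\ forall l, chain a l ->
    (forall p, In p l -> pt p <= b) -> lsum plen l < delta ->
    lsum (fun p => D (g (ps p)) (g (pt p))) l < eps.
Proof.
  intros Hac eps He. destruct (Hac eps He) as [d [Hd Q]]. exists d; split; auto.
  intros l Hc Hb Hl.
  set (d0 := ((0,0),O) : pc).
  specialize (Q (length l) (fun i => ps (nth i l d0)) (fun i => pt (nth i l d0))).
  rewrite <- (psum_nth (fun p => D (g (ps p)) (g (pt p))) l d0).
  apply Q.
  - intros i Hi. destruct (chain_nth a l d0 Hc i Hi) as [A [B _]].
    split; auto. split; auto. apply Hb. apply nth_In; auto.
  - intros i Hi. destruct (chain_nth a l d0 Hc i ltac:(lia)) as [_ [_ C]]. auto.
  - change (psum (fun i => plen (nth i l d0)) (length l) < d). rewrite (psum_nth plen l d0). auto.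
Qed.

Lemma choice_fun {A B : Type} (P : A -> B -> Prop) : (forall a, exists b, P a b) ->
  exists f : A -> B, forall a, P a (f a).
Proof.
  intro H. exists (fun a => proj1_sig (constructive_indefinite_description _ (H a))).
  intro a. apply (proj2_sig (constructive_indefinite_description _ (H a))).
Qed.

Definition mfold {A : Type} (g : A -> R) (L : list A) : R :=
  fold_right (fun x acc => Rmin (g x) acc) 1 L.

Lemma mfold_spec {A : Type} (g : A -> R) L : (forall x, 0 < g x) ->
  0 < mfold g L /\ forall x, In x L -> mfold g L <= g x.
Proof.
  intro Hg. induction L as [|y L [IH1 IH2]]; simpl. split; [lra| intros x []].
  split. apply Rmin_glb_lt; auto.
  intros x [<-|Hx]. apply Rmin_l. eapply Rle_trans. apply Rmin_r. auto.
Qed.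

Definition sfold {A : Type} (g : A -> R) (L : list A) : R :=
  fold_right (fun x acc => g x + acc) 0 L.

Lemma sfold_spec {A : Type} (g : A -> R) L : (forall x, 0 <= g x) ->
  forall x, In x L -> g x <= sfold g L.
Proof.
  intro Hg. induction L as [|y L IH]; simpl. intros x [].
  assert (Hs : 0 <= sfold g L).
  { clear IH. induction L; simpl. lra. specialize (Hg a). lra. }
  intros x [<-|Hx]. lra. specialize (IH x Hx). specialize (Hg y). lra.
Qed.

Lemma ball_open {T : Type} (D : T -> T -> R) (P : Prop) y0 r :
  (forall x y z, D x z <= D x y + D y z) -> open_set D (fun z => P /\ D y0 z < r).
Proof.
  intros Htri z [HP Hz]. exists (r - D y0 z). split. lra.
  intros y Hy. split; auto. specialize (Htri y0 z y). lra.
Qed.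

Lemma closed_sub_compact {T : Type} (D : T -> T -> R) K S : compact_set D K ->
  (forall y, S y -> K y) ->
  (forall y, ~ S y -> exists r, 0 < r /\ forall z, D y z < r -> ~ S z) ->
  compact_set D S.
Proof.
  intros HK HSK Hcl Idx U HUo HUc.
  assert (Ho : forall o : option Idx, open_set D (fun z => match o with Some i => U i z | None => ~ S z end)).
  { intros [i|]; [auto|]. intros z Hz. destruct (Hcl z Hz) as [r [Hr Hr']]. exists r; auto. }
  assert (Hc : forall x, K x -> exists o : option Idx, match o with Some i => U i x | None => ~ S x end).
  { intros x Kx. destruct (classic (S x)) as [Sx|Sx].
    + destruct (HUc x Sx) as [i Hi]. exists (Some i); auto.
    + exists None; auto. }
  destruct (HK (option Idx) _ Ho Hc) as [l Hl].
  exists (flat_map (fun o => match o with Some i => i :: nil | None => nil end) l).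
  intros x Sx. destruct (Hl x (HSK x Sx)) as [[i|] [Hin Hi]].
  + exists i. split; auto. apply in_flat_map. exists (Some i). simpl; auto.
  + exfalso; auto.
Qed.

Section Cone.
Context {X : Type} (d : X -> X -> R) (Hd : is_metric d).

Lemma d_nonneg x y : 0 <= d x y.
Proof. destruct Hd as [H _]; auto. Qed.
Lemma d_refl x : d x x = 0.
Proof. destruct Hd as [_ [H _]]. apply H; auto. Qed.
Lemma d_eq x y : d x y = 0 -> x = y.
Proof. destruct Hd as [_ [H _]]. apply H; auto. Qed.
Lemma d_sym x y : d x y = d y x.
Proof. destruct Hd as [_ [_ [H _]]]; auto. Qed.
Lemma d_tri x y z : d x z <= d x y + d y z.
Proof. destruct Hd as [_ [_ [_ H]]]; auto. Qed.

Lemma cd_tri x y z : cone_dist d x z <= cone_dist d x y + cone_dist d y z.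
Proof.
  unfold cone_dist. assert (H := d_tri (snd x) (snd y) (snd z)).
  assert (Rabs (fst x - fst z) <= Rabs (fst x - fst y) + Rabs (fst y - fst z)).
  { replace (fst x - fst z) with ((fst x - fst y) + (fst y - fst z)) by ring. apply Rabs_triang. }
  lra.
Qed.

Lemma cd_fst x y : Rabs (fst x - fst y) <= cone_dist d x y.
Proof. unfold cone_dist. assert (H := d_nonneg (snd x) (snd y)). lra. Qed.

Lemma cd_snd x y : d (snd x) (snd y) <= cone_dist d x y.
Proof. unfold cone_dist. assert (H := Rabs_pos (fst x - fst y)). lra. Qed.

Lemma prod_compact a b K2 : a <= b -> compact_set d K2 ->
  compact_set (cone_dist d) (fun y => a <= fst y <= b /\ K2 (snd y)).
Proof.
  intros Hab HK Idx U HUo HUc.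
  destruct (choice_fun (fun (y : R * X) (p : R * option Idx) => 0 < fst p /\
     ((a <= fst y <= b /\ K2 (snd y)) -> exists i, snd p = Some i /\
        forall y', cone_dist d y y' < fst p -> U i y'))) as [ch Hch].
  { intro y. destruct (classic (a <= fst y <= b /\ K2 (snd y))) as [Hy|Hy].
    - destruct (HUc y Hy) as [i Hi]. destruct (HUo i y Hi) as [r [Hr Hr']].
      exists (r, Some i). simpl. split; auto. intros _. exists i; auto.
    - exists (1, None). simpl. split. lra. intro; contradiction. }
  assert (Hloc : forall t, a <= t <= b -> exists rho, 0 < rho /\ exists li : list Idx,
     forall t' z, Rabs (t' - t) < rho -> K2 z -> exists i, In i li /\ U i (t', z)).
  { intros t Ht.
    destruct (HK X (fun x z => K2 x /\ d x z < fst (ch (t, x)) / 2)) as [L HL].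
    - intro x. apply ball_open. apply d_tri.
    - intros z Kz. exists z. split; auto. rewrite d_refl. destruct (Hch (t, z)). lra.
    - destruct (mfold_spec (fun x => fst (ch (t, x)) / 2) L) as [Hm1 Hm2].
      { intro x. destruct (Hch (t, x)). lra. }
      exists (mfold (fun x => fst (ch (t, x)) / 2) L). split; auto.
      exists (flat_map (fun x => match snd (ch (t, x)) with Some i => i :: nil | None => nil end) L).
      intros t' z Ht' Kz. destruct (HL z Kz) as [x [HxL [Kx Hxz]]].
      destruct (Hch (t, x)) as [Hpos Hc]. destruct (Hc (conj Ht Kx)) as [i [Hi Hb]].
      exists i. split.
      + apply in_flat_map. exists x. split; auto. rewrite Hi. simpl; auto.
      + apply Hb. unfold cone_dist; simpl. specialize (Hm2 x HxL). simpl in Hm2.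
        rewrite Rabs_minus_sym. lra. }
  destruct (real_ind a b (fun u v => exists li : list Idx, forall t', u <= t' <= v ->
     forall z, K2 z -> exists i, In i li /\ U i (t', z))) as [li Hli]; auto.
  - intros u v w ? ? ? ? [l1 H1] [l2 H2]. exists (l1 ++ l2). intros t' Ht' z Kz.
    destruct (Rle_dec t' v).
    + destruct (H1 t' ltac:(lra) z Kz) as [i [? ?]]. exists i. split; auto. apply in_or_app; auto.
    + destruct (H2 t' ltac:(lra) z Kz) as [i [? ?]]. exists i. split; auto. apply in_or_app; auto.
  - intros x Hx. destruct (Hloc x Hx) as [rho [Hrho [li Hli]]]. exists rho. split; auto.
    intros u v ? ? ? ? ?. exists li. intros t' Ht' z Kz. apply Hli; auto.
    apply Rabs_def1; lra.
  - exists li. intros [t z] [Ht Kz]. simpl in *. apply Hli; auto.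
Qed.

Lemma cont_eps f x : continuity_pt f x -> forall eps, 0 < eps -> exists delta, 0 < delta /\
  forall t, Rabs (t - x) < delta -> Rabs (f t - f x) < eps.
Proof.
  intros Hc eps He. destruct (Hc eps He) as [al [Hal H]]. exists al. split; auto.
  intros t Ht. destruct (Req_dec t x) as [->|Hne].
  - unfold Rminus. rewrite Rplus_opp_r, Rabs_R0. auto.
  - apply (H t). split. split; [exact I|auto]. simpl. unfold R_dist. auto.
Qed.

End Cone.

Lemma md_bound {X : Type} (d : X -> X -> R) (Hd : is_metric d) beta a b x v :
  has_metric_deriv d beta a b x v -> forall eps, 0 < eps -> exists delta, 0 < delta /\
  forall s, a <= s <= b -> Rabs (s - x) < delta -> d (beta s) (beta x) <= (v + eps) * Rabs (s - x).
Proof.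
  intros H eps He. destruct (H eps He) as [dl [Hdl Q]]. exists dl; split; auto.
  intros s Hs Hsx. destruct (Req_dec s x) as [->|Hne].
  - rewrite d_refl by auto. unfold Rminus; rewrite Rplus_opp_r, Rabs_R0. lra.
  - specialize (Q s Hs Hne Hsx).
    assert (Hp : 0 < Rabs (s - x)) by (apply Rabs_pos_lt; lra).
    set (q := d (beta s) (beta x) / Rabs (s - x)) in *.
    assert (Hq : d (beta s) (beta x) = q * Rabs (s - x)) by (unfold q; field; lra).
    rewrite Hq. apply Rabs_def2 in Q. nra.
Qed.

Lemma der_bound h a b x l : has_deriv_on h a b x l -> forall eps, 0 < eps ->
  exists delta, 0 < delta /\ forall s, a <= s <= b -> Rabs (s - x) < delta ->
  Rabs (h s - h x - l * (s - x)) <= eps * Rabs (s - x).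
Proof.
  intros H eps He. destruct (H eps He) as [dl [Hdl Q]]. exists dl; split; auto.
  intros s Hs Hsx. destruct (Req_dec s x) as [->|Hne].
  - replace (h x - h x - l * (x - x)) with 0 by ring. replace (x - x) with 0 by ring. rewrite Rabs_R0. lra.
  - specialize (Q s Hs Hne Hsx).
    replace (h s - h x - l * (s - x)) with (((h s - h x) / (s - x) - l) * (s - x)) by (field; lra).
    rewrite Rabs_mult. apply Rmult_le_compat_r. apply Rabs_pos. lra.
Qed.

Lemma mono_weak (al : R -> R) a b :
  (forall s s', a <= s -> s < s' -> s' <= b -> al s < al s') ->
  forall u v, a <= u -> u <= v -> v <= b -> al u <= al v.
Proof. intros H u v ? ? ?. destruct (Req_dec u v) as [->|]. lra. left; apply H; lra. Qed.

Definition strict_mono (al : R -> R) a b : Prop :=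
  (forall s s', a <= s -> s < s' -> s' <= b -> al s < al s') \/
  (forall s s', a <= s -> s < s' -> s' <= b -> al s' < al s).

Lemma mono_abs3 al a b : strict_mono al a b -> forall u v w, a <= u -> u <= v -> v <= w -> w <= b ->
  Rabs (al w - al u) = Rabs (al w - al v) + Rabs (al v - al u).
Proof.
  intros [H|H] u v w ? ? ? ?.
  - assert (al u <= al v) by (apply (mono_weak al a b); auto; lra).
    assert (al v <= al w) by (apply (mono_weak al a b); auto; lra).
    rewrite !Rabs_pos_eq; lra.
  - assert (HW := mono_weak (fun s => - al s) a b ltac:(intros s s' ? ? ?; specialize (H s s'); lra)).
    assert (al v <= al u) by (specialize (HW u v); simpl in HW; lra).
    assert (al w <= al v) by (specialize (HW v w); simpl in HW; lra).
    rewrite !Rabs_left1; lra.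
Qed.

Lemma partition_in a b n t : is_partition a b n t -> forall i, (i <= n)%nat -> a <= t i <= b.
Proof.
  intros [H0 [Hn Hm]].
  assert (A : forall i, (i <= n)%nat -> a <= t i).
  { induction i; intros Hi. rewrite H0; lra. specialize (Hm i ltac:(lia)). specialize (IHi ltac:(lia)). lra. }
  assert (B : forall k i, (i + k = n)%nat -> t i <= b).
  { induction k; intros i Hi. replace i with n by lia. rewrite Hn; lra.
    specialize (IHk (S i) ltac:(lia)). specialize (Hm i ltac:(lia)). lra. }
  intros i Hi. split; auto. apply (B (n - i)%nat). lia.
Qed.

Lemma telescope_abs al a b n t : strict_mono al a b -> is_partition a b n t ->
  forall m, (m <= n)%nat ->
  psum (fun i => Rabs (al (t (S i)) - al (t i))) m = Rabs (al (t m) - al (t O)).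
Proof.
  intros Hm Hp. assert (Hin := partition_in a b n t Hp).
  destruct Hp as [H0 [Hn Hs]].
  induction m; intros Hmn; simpl.
  - unfold Rminus; rewrite Rplus_opp_r, Rabs_R0; auto.
  - rewrite IHm by lia.
    rewrite (mono_abs3 al a b Hm (t O) (t m) (t (S m))).
    + lra.
    + apply Hin; lia.
    + rewrite H0. apply Hin; lia.
    + apply Hs; lia.
    + apply Hin; lia.
Qed.

Lemma psum_scal c g n : psum (fun i => c * g i) n = c * psum g n.
Proof. induction n; simpl. ring. rewrite IHn. ring. Qed.

Lemma compact_bounds {X : Type} (d : X -> X -> R) (Hd : is_metric d) lo hi f K :
  compact_set (cone_dist d) K -> (forall y, K y -> in_Y lo hi y) ->
  (forall t, in_I lo hi t -> continuity_pt f t /\ 0 < f t) ->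
  exists c S, 0 < c /\ 0 <= S /\ forall y, K y -> c <= f (fst y) /\ Rabs (fst y) <= S.
Proof.
  intros HK HKY Hf.
  destruct (choice_fun (fun (y : R * X) (p : R * R) => 0 < fst p /\ fst p <= 1 /\ 0 < snd p /\
     (K y -> forall t, Rabs (t - fst y) < fst p -> snd p <= f t))) as [ch Hch].
  { intro y. destruct (classic (K y)) as [Ky|Ky].
    - destruct (Hf (fst y) (HKY y Ky)) as [Hc Hp].
      destruct (cont_eps f (fst y) Hc (f (fst y) / 2) ltac:(lra)) as [dl [Hdl Q]].
      exists (Rmin dl 1, f (fst y) / 2). simpl.
      split. apply Rmin_glb_lt; lra. split. apply Rmin_r. split. lra.
      intros _ t Ht. assert (Rabs (t - fst y) < dl) by (eapply Rlt_le_trans; [apply Ht|apply Rmin_l]).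
      specialize (Q t H). apply Rabs_def2 in Q. lra.
    - exists (1, 1). simpl. split. lra. split. lra. split. lra. intro; contradiction. }
  destruct (HK (R * X)%type (fun y z => K y /\ cone_dist d y z < fst (ch y))) as [l Hl].
  - intro y. apply ball_open. apply cd_tri; auto.
  - intros z Kz. exists z. split; auto. unfold cone_dist. rewrite (d_refl d Hd).
    unfold Rminus; rewrite Rplus_opp_r, Rabs_R0. destruct (Hch z). lra.
  - destruct (mfold_spec (fun y => snd (ch y)) l) as [Hm1 Hm2]. { intro y. destruct (Hch y) as [_ [_ [? _]]]; auto. }
    exists (mfold (fun y => snd (ch y)) l), (sfold (fun y => Rabs (fst y) + 1) l).
    split; auto. split.
    { clear. induction l; simpl. lra. assert (H := Rabs_pos (fst a)). lra. }
    intros z Kz. destruct (Hl z Kz) as [y [Hy [Ky Hyz]]].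
    destruct (Hch y) as [H1 [H2 [H3 H4]]].
    assert (Hf1 := cd_fst d Hd y z).
    split.
    + apply Rle_trans with (snd (ch y)). apply Hm2; auto. apply H4; auto. rewrite Rabs_minus_sym. lra.
    + assert (Hs := sfold_spec (fun y => Rabs (fst y) + 1) l ltac:(intro w; assert (H := Rabs_pos (fst w)); lra) y Hy).
      simpl in Hs.
      assert (Rabs (fst z) <= Rabs (fst y) + Rabs (fst z - fst y)).
      { replace (fst z) with (fst y + (fst z - fst y)) at 1 by ring. apply Rabs_triang. }
      rewrite Rabs_minus_sym in Hf1. lra.
Qed.

Lemma causal_seg_bound {X : Type} (d : X -> X -> R) (Hd : is_metric d) lo hi f g a b c :
  causal_curve d lo hi f g a b -> 0 < c -> (forall s, a <= s <= b -> c <= f (fst (g s))) ->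
  forall u0 v0, a <= u0 -> u0 <= v0 -> v0 <= b ->
  d (snd (g u0)) (snd (g v0)) <= / c * Rabs (fst (g v0) - fst (g u0)).
Proof.
  intros [Hab [HY [Hac [Hmono [N [HN Hae]]]]]] Hc Hfc u0 v0 Hu0 Huv Hv0.
  set (k := / c). assert (Hk : 0 < k) by (apply Rinv_0_lt_compat; auto).
  set (al := fun s => fst (g s)). set (be := fun s => snd (g s)).
  assert (Hm : strict_mono al a b) by exact Hmono.
  assert (0 <= 0 + 0) by lra.
  enough (Hphi : (fun u v => d (be u) (be v) - k * Rabs (al v - al u)) u0 v0 <= 0) by (simpl in Hphi; unfold be, al in Hphi; lra).
  refine (key u0 v0 (fun u v => d (be u) (be v) - k * Rabs (al v - al u)) N Huv _ HN _ _).
  - intros u v w ? ? ? ?. cbv beta. rewrite (mono_abs3 al a b Hm u v w) by lra.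
    assert (Ht := d_tri d Hd (be u) (be v) (be w)). lra.
  - intros x Hx Nx eps He.
    destruct (Hae x ltac:(lra) Nx) as [da [v [Hder [Hmd Hcond]]]].
    assert (Hvk : v <= Rabs da * k).
    { assert (Hfx := Hfc x ltac:(lra)).
      destruct (Rle_dec v 0). { assert (0 <= Rabs da * k) by (apply Rmult_le_pos; [apply Rabs_pos|lra]). lra. }
      assert (Hfv : f (fst (g x)) * v <= Rabs da).
      { destruct (Rcase_abs da) as [Hn|Hn]; [rewrite Rabs_left by auto|rewrite Rabs_right by auto]; nra. }
      assert (c * v <= Rabs da) by nra.
      assert (k * (c * v) <= k * Rabs da) by (apply Rmult_le_compat_l; lra).
      replace (k * (c * v)) with v in H1 by (unfold k; field; lra). lra. }
    set (eta := eps / (1 + k)).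
    assert (Heta : 0 < eta) by (unfold eta; apply Rdiv_lt_0_compat; lra).
    assert (Heq : eta * (1 + k) = eps) by (unfold eta; field; lra).
    destruct (md_bound d Hd _ a b x v Hmd eta Heta) as [d1 [Hd1 M]].
    destruct (der_bound _ a b x da Hder eta Heta) as [d2 [Hd2 Dr]].
    exists (Rmin d1 d2). split. apply Rmin_glb_lt; auto.
    intros u w Hu Hux Hxw Hw Hwu. cbv beta.
    assert (Hm1 := Rmin_l d1 d2). assert (Hm2 := Rmin_r d1 d2).
    assert (Hb1 := M u ltac:(lra) ltac:(apply Rabs_def1; lra)).
    assert (Hb2 := M w ltac:(lra) ltac:(apply Rabs_def1; lra)).
    assert (Hd1' := Dr u ltac:(lra) ltac:(apply Rabs_def1; lra)).
    assert (Hd2' := Dr w ltac:(lra) ltac:(apply Rabs_def1; lra)).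
    rewrite (Rabs_left1 (u - x)) in Hb1, Hd1' by lra.
    rewrite (Rabs_pos_eq (w - x)) in Hb2, Hd2' by lra.
    rewrite (mono_abs3 al a b Hm u x w) by lra.
    assert (HA : Rabs da * (w - x) - eta * (w - x) <= Rabs (al w - al x)).
    { assert (Htr : Rabs (da * (w - x)) <= Rabs (al w - al x) + Rabs (fst (g w) - fst (g x) - da * (w - x))).
      { replace (da * (w - x)) with ((al w - al x) - (fst (g w) - fst (g x) - da * (w - x))) at 1 by (unfold al; ring).
        eapply Rle_trans. apply Rabs_triang. rewrite Rabs_Ropp. lra. }
      rewrite Rabs_mult, (Rabs_pos_eq (w - x)) in Htr by lra. lra. }
    assert (HB : Rabs da * (x - u) - eta * (x - u) <= Rabs (al x - al u)).
    { assert (Htr : Rabs (da * (u - x)) <= Rabs (al x - al u) + Rabs (fst (g u) - fst (g x) - da * (u - x))).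
      { replace (da * (u - x)) with (-(al x - al u) - (fst (g u) - fst (g x) - da * (u - x))) at 1 by (unfold al; ring).
        eapply Rle_trans. apply Rabs_triang. rewrite !Rabs_Ropp. lra. }
      rewrite Rabs_mult, (Rabs_left1 (u - x)) in Htr by lra. lra. }
    assert (Ht := d_tri d Hd (be u) (be x) (be w)).
    assert (Hs := d_sym d Hd (be x) (be w)).
    unfold be in *.
    assert (P1 : v * (w - u) <= Rabs da * k * (w - u)) by (apply Rmult_le_compat_r; lra).
    assert (P2 : k * (Rabs da * (w - x) - eta * (w - x)) <= k * Rabs (al w - al x)) by (apply Rmult_le_compat_l; lra).
    assert (P3 : k * (Rabs da * (x - u) - eta * (x - u)) <= k * Rabs (al x - al u)) by (apply Rmult_le_compat_l; lra).
    rewrite <- Heq. nra.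
  - intros eps He. destruct (ac_list _ g a b Hac eps He) as [dl [Hdl Q]]. exists dl. split; auto.
    intros l Hcl Hb Hl. eapply Rle_lt_trans; [|apply (Q l)].
    + apply lsum_le. intros p _. cbv beta.
      assert (Hcs := cd_snd d (g (ps p)) (g (pt p))).
      assert (0 <= k * Rabs (al (pt p) - al (ps p))) by (apply Rmult_le_pos; [lra|apply Rabs_pos]).
      unfold be; lra.
    + apply chain_mono with u0; auto.
    + intros p Hp. specialize (Hb p Hp). lra.
    + auto.
Qed.

Lemma nti {X : Type} (d : X -> X -> R) (Hd : is_metric d) lo hi f :
  (forall t, in_I lo hi t -> continuity_pt f t /\ 0 < f t) ->
  non_totally_imprisoning d lo hi f.
Proof.
  intros Hf K HKY HKc.
  destruct (compact_bounds d Hd lo hi f K HKc HKY Hf) as [c [Sb [Hc [HS HB]]]].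
  assert (Hk : 0 < / c) by (apply Rinv_0_lt_compat; auto).
  exists ((1 + / c) * (2 * Sb) + 1). split. nra.
  intros g a b Hcaus HK n t Hpart. unfold partition_sum.
  assert (Hin := partition_in a b n t Hpart).
  assert (Hfc : forall s, a <= s <= b -> c <= f (fst (g s))) by (intros s Hs; apply (HB (g s)); auto).
  assert (Hm : strict_mono (fun s => fst (g s)) a b) by (destruct Hcaus as [_ [_ [_ [Hm _]]]]; exact Hm).
  apply Rle_trans with (psum (fun i => (1 + / c) * Rabs (fst (g (t (S i))) - fst (g (t i)))) n).
  - apply psum_le. intros i Hi. unfold cone_dist.
    destruct Hpart as [_ [_ Hst]].
    assert (Hsb := causal_seg_bound d Hd lo hi f g a b c Hcaus Hc Hfc (t i) (t (S i))
       ltac:(apply Hin; lia) (Hst i Hi) ltac:(apply Hin; lia)).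
    rewrite Rabs_minus_sym. lra.
  - rewrite psum_scal. rewrite (telescope_abs _ a b n t Hm Hpart n (Nat.le_refl n)).
    destruct Hpart as [H0 [Hn _]]. rewrite H0, Hn. assert (Hab : a < b) by apply Hcaus.
    assert (A1 := HB (g a) (HK a ltac:(lra))). assert (A2 := HB (g b) (HK b ltac:(lra))).
    assert (Rabs (fst (g b) - fst (g a)) <= 2 * Sb).
    { eapply Rle_trans. apply Rabs_triang. rewrite Rabs_Ropp. lra. }
    assert ((1 + / c) * Rabs (fst (g b) - fst (g a)) <= (1 + / c) * (2 * Sb)) by (apply Rmult_le_compat_l; lra).
    lra.
Qed.

Lemma abs_le_inv x e : Rabs x <= e -> -e <= x <= e.
Proof. unfold Rabs; destruct (Rcase_abs x); intros; lra. Qed.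

Definition Fgood (f F : R -> R) (A B : R) : Prop :=
  (forall x, A <= x <= B -> 0 < f x /\ forall eps, 0 < eps -> exists delta, 0 < delta /\
      forall s, Rabs (s - x) < delta -> Rabs (F s - F x - / f x * (s - x)) <= eps * Rabs (s - x)) /\
  exists m L, 0 < m /\ forall u v, A <= u -> u <= v -> v <= B -> m * (v - u) <= F v - F u <= L * (v - u).

Lemma fd_increasing {X : Type} (d : X -> X -> R) lo hi f g a b :
  future_directed d lo hi f g a b ->
  forall s s', a <= s -> s < s' -> s' <= b -> fst (g s) < fst (g s').
Proof.
  intros [[Hab [HY [Hac [Hmono _]]]] Hfd]. destruct Hmono as [Hi|Hdcr]; auto.
  exfalso. destruct (ae_exists a b _ Hab Hfd) as [x [Hx [da [Hder Hda]]]].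
  apply (deriv_pos_not_decr (fun s => fst (g s)) a b x da Hab Hx Hder Hda Hdcr).
Qed.

Lemma fd_forward {X : Type} (d : X -> X -> R) (Hd : is_metric d) lo hi f g a b F A B :
  future_directed d lo hi f g a b -> Fgood f F A B ->
  A <= fst (g a) -> fst (g b) <= B ->
  d (snd (g a)) (snd (g b)) <= F (fst (g b)) - F (fst (g a)).
Proof.
  intros Hfd [HF [m [L [Hm HFm]]]] HA HB.
  assert (Hinc := fd_increasing d lo hi f g a b Hfd).
  destruct Hfd as [[Hab [HY [Hac [_ [N1 [HN1 Hae1]]]]]] [N2 [HN2 Hae2]]].
  set (al := fun s => fst (g s)). set (be := fun s => snd (g s)).
  assert (Hw := mono_weak al a b Hinc).
  assert (Hrange : forall s, a <= s <= b -> A <= al s <= B).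
  { intros s Hs. split. apply Rle_trans with (al a); auto. apply Hw; lra.
    apply Rle_trans with (al b); auto. apply Hw; lra. }
  assert (HFmono : forall s t, a <= s -> s <= t -> t <= b -> F (al s) <= F (al t)).
  { intros s t ? ? ?. destruct (Hrange s ltac:(lra)). destruct (Hrange t ltac:(lra)).
    assert (Hst : al s <= al t) by (apply Hw; lra).
    destruct (HFm (al s) (al t) ltac:(lra) Hst ltac:(lra)) as [Hq1 _].
    assert (0 <= m * (al t - al s)) by (apply Rmult_le_pos; lra).
    lra. }
  enough (Hphi : (fun u v => d (be u) (be v) - (F (al v) - F (al u))) a b <= 0) by (simpl in Hphi; unfold be, al in Hphi; lra).
  refine (key a b (fun u v => d (be u) (be v) - (F (al v) - F (al u))) (fun x => N1 x \/ N2 x) ltac:(lra) _ (negligible_union N1 N2 HN1 HN2) _ _).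
  - intros u v w ? ? ? ?. cbv beta. assert (Ht := d_tri d Hd (be u) (be v) (be w)). lra.
  - intros x Hx Nx eps He.
    assert (Nx1 : ~ N1 x) by tauto. assert (Nx2 : ~ N2 x) by tauto.
    destruct (Hae1 x Hx Nx1) as [da [v [Hder [Hmd Hcond]]]].
    destruct (Hae2 x Hx Nx2) as [da' [Hder' Hda']].
    rewrite <- (deriv_unique _ a b x da da' Hab Hx Hder Hder') in Hda'.
    destruct (HF (al x) (Hrange x Hx)) as [Hfpos HFd].
    set (phi := / f (al x)). assert (Hphi : 0 < phi) by (apply Rinv_0_lt_compat; auto).
    assert (Hvk : v <= da * phi).
    { destruct (Rle_dec v 0). nra.
      assert (Hfv : f (al x) * v <= da) by (unfold al; nra).
      assert (phi * (f (al x) * v) <= phi * da) by (apply Rmult_le_compat_l; lra).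
      replace (phi * (f (al x) * v)) with v in H by (unfold phi; field; lra). lra. }
    set (eta := Rmin (eps / (1 + da + phi)) phi).
    assert (Heta1 : eta <= eps / (1 + da + phi)) by apply Rmin_l.
    assert (Heta2 : eta <= phi) by apply Rmin_r.
    assert (Heta : 0 < eta) by (apply Rmin_glb_lt; [apply Rdiv_lt_0_compat|]; lra).
    assert (Heta3 : eta * (1 + da + phi) <= eps).
    { apply Rmult_le_compat_r with (r := 1 + da + phi) in Heta1; [|lra].
      replace (eps / (1 + da + phi) * (1 + da + phi)) with eps in Heta1 by (field; lra). lra. }
    destruct (md_bound d Hd _ a b x v Hmd eta Heta) as [d1 [Hd1 M]].
    destruct (der_bound _ a b x da Hder eta Heta) as [d2 [Hd2 Dr]].
    destruct (HFd eta Heta) as [d3 [Hd3 FD]].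
    set (d4 := d3 / (da + phi + 2)).
    assert (Hd4 : 0 < d4) by (apply Rdiv_lt_0_compat; lra).
    exists (Rmin d1 (Rmin d2 d4)). split. repeat apply Rmin_glb_lt; auto.
    intros u w Hu Hux Hxw Hwb Hwu. cbv beta.
    assert (Hm1 := Rmin_l d1 (Rmin d2 d4)). assert (Hm2 := Rmin_r d1 (Rmin d2 d4)).
    assert (Hm3 := Rmin_l d2 d4). assert (Hm4 := Rmin_r d2 d4).
    assert (Hb1 := M u ltac:(lra) ltac:(apply Rabs_def1; lra)).
    assert (Hb2 := M w ltac:(lra) ltac:(apply Rabs_def1; lra)).
    assert (Hd1' := Dr u ltac:(lra) ltac:(apply Rabs_def1; lra)).
    assert (Hd2' := Dr w ltac:(lra) ltac:(apply Rabs_def1; lra)).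
    rewrite (Rabs_left1 (u - x)) in Hb1, Hd1' by lra.
    rewrite (Rabs_pos_eq (w - x)) in Hb2, Hd2' by lra.
    assert (Haw : al x <= al w) by (apply Hw; lra).
    assert (Hau : al u <= al x) by (apply Hw; lra).
    unfold al in *. cbv beta in *.
    apply abs_le_inv in Hd1'. apply abs_le_inv in Hd2'.
    assert (Hd4' : (da + phi + 2) * d4 = d3) by (unfold d4; field; lra).
    assert (Cw : Rabs (fst (g w) - fst (g x)) < d3).
    { rewrite Rabs_pos_eq by lra.
      assert ((da + eta) * (w - x) <= (da + phi + 2) * (w - x)) by (apply Rmult_le_compat_r; lra).
      assert ((da + phi + 2) * (w - x) < (da + phi + 2) * d4) by (apply Rmult_lt_compat_l; lra).
      lra. }
    assert (Cu : Rabs (fst (g u) - fst (g x)) < d3).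
    { rewrite Rabs_left1 by lra.
      assert ((da + eta) * (x - u) <= (da + phi + 2) * (x - u)) by (apply Rmult_le_compat_r; lra).
      assert ((da + phi + 2) * (x - u) < (da + phi + 2) * d4) by (apply Rmult_lt_compat_l; lra).
      lra. }
    assert (Fw := FD (fst (g w)) Cw). assert (Fu := FD (fst (g u)) Cu).
    rewrite (Rabs_pos_eq (fst (g w) - fst (g x))) in Fw by lra. rewrite (Rabs_left1 (fst (g u) - fst (g x))) in Fu by lra.
    apply abs_le_inv in Fw. apply abs_le_inv in Fu.
    assert (Ht := d_tri d Hd (be u) (be x) (be w)).
    assert (Hs := d_sym d Hd (be x) (be w)).
    unfold be in *.
    assert (G1 : (phi - eta) * ((da - eta) * (w - x)) <= (phi - eta) * (fst (g w) - fst (g x)))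
      by (apply Rmult_le_compat_l; lra).
    assert (G2 : (phi - eta) * ((da - eta) * (x - u)) <= (phi - eta) * (fst (g x) - fst (g u)))
      by (apply Rmult_le_compat_l; lra).
    assert (P1 : v * (w - u) <= da * phi * (w - u)) by (apply Rmult_le_compat_r; lra).
    assert (P2 : eta * (1 + da + phi) * (w - u) <= eps * (w - u)) by (apply Rmult_le_compat_r; lra).
    assert (P3 : 0 <= eta * eta * (w - u)) by (apply Rmult_le_pos; nra).
    unfold phi in *. lra.
  - intros eps He. destruct (ac_list _ g a b Hac eps He) as [dl [Hdl Q]]. exists dl. split; auto.
    intros l Hcl Hb Hl. eapply Rle_lt_trans; [|apply (Q l Hcl Hb Hl)].
    apply lsum_le. intros p Hp. cbv beta.
    assert (Hcs := cd_snd d (g (ps p)) (g (pt p))).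
    assert (Hc1 := chain_nth a l ((0,0),O) Hcl).
    destruct (In_nth l p ((0,0),O) Hp) as [i [Hi Hpi]].
    destruct (Hc1 i Hi) as [C1 [C2 _]]. rewrite Hpi in C1, C2.
    assert (pt p <= b) by auto.
    assert (F (al (ps p)) <= F (al (pt p))) by (apply HFmono; lra).
    unfold be; lra.
Qed.

Definition has_der_at (F : R -> R) (x l : R) : Prop :=
  forall eps, 0 < eps -> exists delta, 0 < delta /\
    forall s, Rabs (s - x) < delta -> Rabs (F s - F x - l * (s - x)) <= eps * Rabs (s - x).

Lemma dpl_to_der F x l : derivable_pt_lim F x l -> has_der_at F x l.
Proof.
  intros H eps He. destruct (H eps He) as [dl Hdl]. exists dl. split. apply cond_pos.
  intros s Hs. destruct (Req_dec s x) as [->|Hne].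
  - replace (F x - F x - l * (x - x)) with 0 by ring. replace (x - x) with 0 by ring. rewrite Rabs_R0. lra.
  - specialize (Hdl (s - x) ltac:(lra) Hs). replace (x + (s - x)) with s in Hdl by ring.
    replace (F s - F x - l * (s - x)) with (((F s - F x) / (s - x) - l) * (s - x)) by (field; lra).
    rewrite Rabs_mult. apply Rmult_le_compat_r. apply Rabs_pos. lra.
Qed.

Lemma der_lower F gd A B m : A <= B -> (forall x, A <= x <= B -> has_der_at F x (gd x)) ->
  (forall x, A <= x <= B -> m <= gd x) -> m * (B - A) <= F B - F A.
Proof.
  intros HAB Hder Hm.
  assert (H := local_nonpos A B (fun u v => m * (v - u) - (F v - F u)) HAB).
  cbv beta in H. enough (m * (B - A) - (F B - F A) <= 0) by lra. apply H.
  - intros u v w ? ? ? ?. lra.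
  - intros x Hx eps He. destruct (Hder x Hx eps He) as [dl [Hdl Q]].
    exists dl. split; auto. intros u v ? ? ? ? ?.
    assert (Qu := Q u ltac:(apply Rabs_def1; lra)). assert (Qv := Q v ltac:(apply Rabs_def1; lra)).
    rewrite (Rabs_left1 (u - x)) in Qu by lra. rewrite (Rabs_pos_eq (v - x)) in Qv by lra.
    apply abs_le_inv in Qu. apply abs_le_inv in Qv.
    assert (Hmx := Hm x Hx).
    assert (m * (v - x) <= gd x * (v - x)) by (apply Rmult_le_compat_r; lra).
    assert (m * (x - u) <= gd x * (x - u)) by (apply Rmult_le_compat_r; lra).
    nra.
Qed.

Lemma der_upper F gd A B L : A <= B -> (forall x, A <= x <= B -> has_der_at F x (gd x)) ->
  (forall x, A <= x <= B -> gd x <= L) -> F B - F A <= L * (B - A).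
Proof.
  intros HAB Hder Hm.
  assert (H := der_lower (fun s => - F s) (fun s => - gd s) A B (- L) HAB).
  cbv beta in H. enough (- L * (B - A) <= - F B - - F A) by lra. apply H.
  - intros x Hx eps He. destruct (Hder x Hx eps He) as [dl [Hdl Q]]. exists dl. split; auto.
    intros s Hs. specialize (Q s Hs).
    replace (- F s - - F x - - gd x * (s - x)) with (- (F s - F x - gd x * (s - x))) by ring.
    rewrite Rabs_Ropp. auto.
  - intros x Hx. specialize (Hm x Hx). lra.
Qed.

Lemma F_exists f A B : A <= B -> (forall x, A <= x <= B -> continuity_pt f x /\ 0 < f x) ->
  exists F, Fgood f F A B.
Proof.
  intros HAB Hf.
  assert (C0 : forall x, A <= x <= B -> continuity_pt (fun s => / f s) x).
  { intros x Hx. destruct (Hf x Hx) as [Hc Hp]. apply (continuity_pt_inv f x Hc). lra. }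
  set (F := primitive HAB (FTC_P1 HAB C0)).
  assert (HD : forall x, A <= x <= B -> has_der_at F x (/ f x)).
  { intros x Hx. apply dpl_to_der. apply (@RiemannInt_P28 (fun s => / f s) A B x HAB C0 Hx). }
  exists F. split.
  - intros x Hx. split. apply Hf; auto. apply HD; auto.
  - destruct (continuity_ab_min _ A B HAB C0) as [mx [Hmx Hmx']].
    destruct (continuity_ab_maj _ A B HAB C0) as [Mx [HMx HMx']].
    exists (/ f mx), (/ f Mx). split. apply Rinv_0_lt_compat. apply Hf; auto.
    intros u v Hu Huv Hv. split.
    + apply der_lower with (gd := fun s => / f s); auto.
      intros x Hx. apply HD; lra. intros x Hx. apply Hmx; lra.
    + apply der_upper with (gd := fun s => / f s); auto.
      intros x Hx. apply HD; lra. intros x Hx. apply HMx; lra.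
Qed.

Lemma eps_to_cont f x : (forall eps, 0 < eps -> exists delta, 0 < delta /\
  forall t, Rabs (t - x) < delta -> Rabs (f t - f x) < eps) -> continuity_pt f x.
Proof.
  intros H eps He. destruct (H eps He) as [dl [Hdl Q]]. exists dl. split. lra.
  intros t [_ Ht]. apply Q. exact Ht.
Qed.

Definition clamp01 (s : R) : R := if Rle_dec s 0 then 0 else if Rle_dec 1 s then 1 else s.

Lemma clamp01_in s : 0 <= clamp01 s <= 1.
Proof. unfold clamp01. destruct (Rle_dec s 0); [lra|]. destruct (Rle_dec 1 s); lra. Qed.

Lemma clamp01_id s : 0 <= s <= 1 -> clamp01 s = s.
Proof. intros. unfold clamp01. destruct (Rle_dec s 0); [lra|]. destruct (Rle_dec 1 s); lra. Qed.

Lemma clamp01_lip s s' : Rabs (clamp01 s - clamp01 s') <= Rabs (s - s').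
Proof.
  unfold clamp01. destruct (Rle_dec s 0), (Rle_dec 1 s), (Rle_dec s' 0), (Rle_dec 1 s');
  unfold Rabs; repeat match goal with |- context [Rcase_abs ?a] => destruct (Rcase_abs a) end; lra.
Qed.

Lemma geodesic_param {X : Type} (d : X -> X -> R) (Hd : is_metric d) :
  is_geodesic_space d -> forall x1 x2, exists sg : R -> X,
    sg 0 = x1 /\ sg (d x1 x2) = x2 /\
    forall l m, 0 <= l <= d x1 x2 -> 0 <= m <= d x1 x2 -> d (sg l) (sg m) = Rabs (l - m).
Proof.
  intros Hgeo x1 x2. destruct (Hgeo x1 x2) as [g0 [Hc [H0 [H1 Hlen]]]].
  set (D := d x1 x2).
  set (h := fun u => d x1 (g0 u)).
  assert (Hsplit : forall u w, 0 <= u -> u <= w -> w <= 1 ->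
     h u + d (g0 u) (g0 w) + d (g0 w) x2 <= D).
  { intros u w ? ? ?. destruct Hlen as [Hub _].
    set (t := fun i : nat => match i with O => 0 | 1%nat => u | 2%nat => w | _ => 1 end).
    assert (Hp : is_partition 0 1 3 t).
    { split. reflexivity. split. reflexivity. intros i Hi.
      destruct i as [|[|[|i]]]; simpl; lra || lia. }
    assert (E : exists n t', is_partition 0 1 n t' /\ partition_sum d g0 3 t = partition_sum d g0 n t')
      by (exists 3%nat, t; auto).
    specialize (Hub _ E).
    unfold partition_sum in Hub. simpl in Hub. unfold h. rewrite H0, H1 in Hub. fold D in Hub. lra. }
  assert (Hdiff : forall u w, 0 <= u -> u <= w -> w <= 1 -> d (g0 u) (g0 w) = h w - h u).
  { intros u w ? ? ?. specialize (Hsplit u w H H2 H3).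
    assert (T1 := d_tri d Hd x1 (g0 u) (g0 w)).
    assert (T2 := d_tri d Hd x1 (g0 w) x2). fold D in T2. unfold h in *. lra. }
  assert (Hh0 : h 0 = 0) by (unfold h; rewrite H0; apply (d_refl d Hd)).
  assert (Hh1 : h 1 = D) by (unfold h; rewrite H1; reflexivity).
  assert (Hcont : forall x, continuity_pt (fun s => h (clamp01 s)) x).
  { intro x. apply eps_to_cont. intros eps He.
    destruct (Hc (clamp01 x) (clamp01_in x) eps He) as [dl [Hdl Q]].
    exists dl. split; auto. intros t Ht.
    assert (Hq := Q (clamp01 t) (clamp01_in t) ltac:(eapply Rle_lt_trans; [apply clamp01_lip|auto])).
    unfold h. assert (T1 := d_tri d Hd x1 (g0 (clamp01 t)) (g0 (clamp01 x))).
    assert (T2 := d_tri d Hd x1 (g0 (clamp01 x)) (g0 (clamp01 t))).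
    rewrite (d_sym d Hd (g0 (clamp01 x))) in T2.
    apply Rabs_def1; lra. }
  assert (Hivt : forall l, exists u, 0 <= u <= 1 /\ (0 <= l <= D -> h u = l)).
  { intro l. destruct (classic (0 <= l <= D)) as [Hl|Hl]; [|exists 0; split; [lra|tauto]].
    destruct (Req_dec l 0) as [->|Hl0]. exists 0. split; [lra|auto].
    destruct (Req_dec l D) as [->|HlD]. exists 1. split; [lra|auto].
    destruct (IVT (fun s => h (clamp01 s) - l) 0 1) as [z [Hz Hz']].
    - intro x. apply continuity_pt_minus. apply Hcont. apply continuity_pt_const. intros a b; reflexivity.
    - lra.
    - cbv beta. rewrite clamp01_id by lra. lra.
    - cbv beta. rewrite clamp01_id by lra. lra.
    - exists z. split; auto. intros _. cbv beta in Hz'. rewrite clamp01_id in Hz' by lra. lra. }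
  destruct (choice_fun _ Hivt) as [uf Huf].
  exists (fun l => g0 (uf l)). split; [|split].
  - destruct (Huf 0) as [Hu Hu']. apply (d_eq d Hd). rewrite (d_sym d Hd).
    fold (h (uf 0)). apply Hu'. split. lra. unfold D; apply (d_nonneg d Hd).
  - fold D. destruct (Huf D) as [Hu Hu'].
    assert (HD0 : 0 <= D) by (unfold D; apply (d_nonneg d Hd)).
    apply (d_eq d Hd). rewrite <- H1. rewrite Hdiff by lra. rewrite Hh1, Hu'; lra.
  - intros l m Hl Hm. fold D in Hl, Hm. destruct (Huf l) as [Hul Hul']. destruct (Huf m) as [Hum Hum'].
    destruct (Rle_dec (uf l) (uf m)).
    + rewrite Hdiff by lra. rewrite Hul', Hum' by auto. rewrite Rabs_left1; [ring|].
      assert (d (g0 (uf l)) (g0 (uf m)) = m - l) by (rewrite Hdiff by lra; rewrite Hul', Hum' by auto; ring).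
      assert (0 <= d (g0 (uf l)) (g0 (uf m))) by (apply (d_nonneg d Hd)). lra.
    + rewrite (d_sym d Hd). rewrite Hdiff by lra. rewrite Hul', Hum' by auto.
      assert (d (g0 (uf m)) (g0 (uf l)) = l - m) by (rewrite Hdiff by lra; rewrite Hul', Hum' by auto; ring).
      assert (0 <= d (g0 (uf m)) (g0 (uf l))) by (apply (d_nonneg d Hd)).
      rewrite Rabs_pos_eq; lra.
Qed.

Lemma in_I_conv lo hi t1 t2 s : in_I lo hi t1 -> in_I lo hi t2 -> t1 <= s <= t2 -> in_I lo hi s.
Proof. unfold in_I. destruct lo, hi; simpl; intros; intuition lra. Qed.

Lemma negligible_empty : negligible (fun _ => False).
Proof.
  intros eps He. exists (fun _ => 0), (fun _ => 0). split. intro; lra. split. intros x [].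
  intro n. assert (psum (fun _ => 0 - 0) n = 0) by (induction n; simpl; [auto|rewrite IHn; ring]). lra.
Qed.

Lemma backward {X : Type} (d : X -> X -> R) (Hd : is_metric d) lo hi f F A B t1 t2 x1 x2 :
  is_geodesic_space d -> (forall t, in_I lo hi t -> 0 < f t) -> Fgood f F A B ->
  t1 < t2 -> A <= t1 -> t2 <= B -> in_I lo hi t1 -> in_I lo hi t2 ->
  d x1 x2 <= F t2 - F t1 -> causal_le d lo hi f (t1, x1) (t2, x2).
Proof.
  intros Hgeo Hfp [HF [m [L [Hm HFm]]]] H12 HA HB HI1 HI2 HDle.
  destruct (geodesic_param d Hd Hgeo x1 x2) as [sg [Hs0 [HsD Hsd]]].
  set (D := d x1 x2) in *. set (Dl := F t2 - F t1) in *.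
  assert (HD0 : 0 <= D) by (apply (d_nonneg d Hd)).
  destruct (HFm t1 t2) as [HF1 HF2]; try lra.
  assert (HDl : 0 < Dl) by (unfold Dl; nra).
  assert (HL : 0 < L) by nra.
  set (k := D / Dl).
  assert (Hk0 : 0 <= k) by (unfold k; apply Rmult_le_pos; [lra|left; apply Rinv_0_lt_compat; lra]).
  assert (Hk1 : k <= 1) by (unfold k; apply Rmult_le_reg_r with Dl; [lra|]; unfold Rdiv; rewrite Rmult_assoc, Rinv_l; lra).
  assert (HkD : k * Dl = D) by (unfold k; field; lra).
  assert (Hmon : forall s t, t1 <= s -> s <= t -> t <= t2 -> 0 <= F t - F s <= L * (t - s)).
  { intros s t ? ? ?. destruct (HFm s t) as [Q1 Q2]; try lra. split; [|lra].
    assert (0 <= m * (t - s)) by (apply Rmult_le_pos; lra). lra. }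
  set (arg := fun s => k * (F s - F t1)).
  assert (Harg : forall s, t1 <= s <= t2 -> 0 <= arg s <= D).
  { intros s Hs. destruct (Hmon t1 s) as [Q1 _]; try lra. destruct (Hmon s t2) as [Q3 _]; try lra.
    unfold arg. split. apply Rmult_le_pos; lra. rewrite <- HkD. apply Rmult_le_compat_l; unfold Dl; lra. }
  assert (Hdist : forall s t, t1 <= s <= t2 -> t1 <= t <= t2 ->
    d (sg (arg s)) (sg (arg t)) = k * Rabs (F s - F t)).
  { intros s t Hs Ht. rewrite Hsd by auto. unfold arg.
    replace (k * (F s - F t1) - k * (F t - F t1)) with (k * (F s - F t)) by ring.
    rewrite Rabs_mult, (Rabs_pos_eq k); auto. }
  set (g := fun s => (s, sg (arg s))).
  right. exists g, t1, t2. split; [split|split].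
  - split; auto. split.
    { intros s Hs. unfold in_Y, g; simpl. apply in_I_conv with t1 t2; auto. }
    split.
    { intros eps He. exists (eps / (1 + k * L)).
      assert (HkL : 0 < 1 + k * L) by nra.
      split. apply Rdiv_lt_0_compat; lra.
      intros n s t Hst _ Hsum.
      apply Rle_lt_trans with (psum (fun i => (1 + k * L) * (t i - s i)) n).
      - apply psum_le. intros i Hi. destruct (Hst i Hi) as [Q1 [Q2 Q3]].
        unfold g, cone_dist; simpl. rewrite Hdist by lra.
        destruct (Hmon (s i) (t i)) as [M1 M2]; try lra.
        rewrite (Rabs_left1 (s i - t i)) by lra. rewrite (Rabs_left1 (F (s i) - F (t i))) by lra.
        assert (k * (F (t i) - F (s i)) <= k * (L * (t i - s i))) by (apply Rmult_le_compat_l; lra).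
        nra.
      - rewrite psum_scal.
        apply Rmult_lt_compat_l with (r := 1 + k * L) in Hsum; auto.
        replace ((1 + k * L) * (eps / (1 + k * L))) with eps in Hsum by (field; lra). auto. }
    split.
    { left. intros s s' _ ? _. unfold g; simpl; auto. }
    exists (fun _ => False). split. apply negligible_empty.
    intros t Ht _. destruct (HF t ltac:(lra)) as [Hft HFd].
    exists 1, (k / f t). split; [|split].
    + intros eps He. exists 1. split. lra. intros s _ Hne _. unfold g; simpl.
      replace ((s - t) / (s - t) - 1) with 0 by (field; lra). rewrite Rabs_R0; lra.
    + intros eps He. set (eta := eps / (k + 1)).
      assert (Heta : 0 < eta) by (unfold eta; apply Rdiv_lt_0_compat; lra).
      destruct (HFd eta Heta) as [dl [Hdl Q]]. exists dl. split; auto.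
      intros s Hs Hne Hsd'. unfold g; simpl. rewrite Hdist by lra.
      specialize (Q s Hsd').
      assert (Hp : 0 < Rabs (s - t)) by (apply Rabs_pos_lt; lra).
      set (q := (F s - F t) / (s - t)).
      assert (Hq : F s - F t = q * (s - t)) by (unfold q; field; lra).
      rewrite Hq in Q |- *.
      replace (q * (s - t) - / f t * (s - t)) with ((q - / f t) * (s - t)) in Q by ring.
      rewrite Rabs_mult in Q.
      assert (Hq2 : Rabs (q - / f t) <= eta).
      { apply Rmult_le_reg_r with (Rabs (s - t)); auto. }
      rewrite Rabs_mult. replace (k * (Rabs q * Rabs (s - t)) / Rabs (s - t)) with (k * Rabs q) by (field; lra).
      assert (Hphi : 0 < / f t) by (apply Rinv_0_lt_compat; auto).
      assert (Hin := Rabs_triang_inv2 q (/ f t)). rewrite (Rabs_pos_eq (/ f t)) in Hin by lra.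
      replace (k * Rabs q - k / f t) with (k * (Rabs q - / f t)) by (unfold Rdiv; ring).
      rewrite Rabs_mult, (Rabs_pos_eq k) by auto.
      assert (k * Rabs (Rabs q - / f t) <= k * eta) by (apply Rmult_le_compat_l; lra).
      assert (k * eta < eps) by (unfold eta; apply Rmult_lt_reg_r with (k + 1); [lra|];
        replace (k * (eps / (k + 1)) * (k + 1)) with (k * eps) by (field; lra); nra).
      lra.
    + unfold g. cbn [fst]. replace (- 1 ^ 2 + f t ^ 2 * (k / f t) ^ 2) with (k ^ 2 - 1) by (field; lra). nra.
  - exists (fun _ => False). split. apply negligible_empty. intros t Ht _.
    exists 1. split; [|lra].
    intros eps He. exists 1. split. lra. intros s _ Hne _. unfold g; simpl.
    replace ((s - t) / (s - t) - 1) with 0 by (field; lra). rewrite Rabs_R0; lra.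
  - unfold g, arg. replace (k * (F t1 - F t1)) with 0 by ring. rewrite Hs0. reflexivity.
  - unfold g, arg. fold Dl. rewrite HkD. rewrite HsD. reflexivity.
Qed.

Lemma le_time {X : Type} (d : X -> X -> R) lo hi f y y' :
  causal_le d lo hi f y y' -> fst y <= fst y'.
Proof.
  intros [->|[g [a [b [Hfd [Ha Hb]]]]]]. lra.
  assert (Hab : a < b) by apply Hfd.
  assert (H := fd_increasing d lo hi f g a b Hfd a b ltac:(lra) Hab ltac:(lra)).
  rewrite Ha, Hb in H. lra.
Qed.

Lemma le_forward {X : Type} (d : X -> X -> R) (Hd : is_metric d) lo hi f F A B y y' :
  causal_le d lo hi f y y' -> Fgood f F A B -> A <= fst y -> fst y' <= B ->
  d (snd y) (snd y') <= F (fst y') - F (fst y).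
Proof.
  intros [->|[g [a [b [Hfd [Ha Hb]]]]]] HF HA HB.
  - rewrite (d_refl d Hd). lra.
  - rewrite <- Ha, <- Hb. rewrite <- Ha in HA. rewrite <- Hb in HB.
    apply (fd_forward d Hd lo hi f g a b F A B Hfd HF HA HB).
Qed.

Lemma F_lip f F A B : Fgood f F A B -> exists L, 0 < L /\
  forall u v, A <= u <= B -> A <= v <= B -> Rabs (F v - F u) <= L * Rabs (v - u).
Proof.
  intros [_ [m [L [Hm HFm]]]]. exists (Rmax L 1). split. assert (H := Rmax_r L 1). lra.
  assert (HL : L <= Rmax L 1) by apply Rmax_l.
  intros u v Hu Hv. destruct (Rle_dec u v).
  - destruct (HFm u v) as [Q1 Q2]; try lra.
    assert (0 <= m * (v - u)) by (apply Rmult_le_pos; lra).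
    rewrite !Rabs_pos_eq by lra.
    assert (L * (v - u) <= Rmax L 1 * (v - u)) by (apply Rmult_le_compat_r; lra). lra.
  - destruct (HFm v u) as [Q1 Q2]; try lra.
    assert (0 <= m * (u - v)) by (apply Rmult_le_pos; lra).
    rewrite !Rabs_left1 by lra.
    assert (L * (u - v) <= Rmax L 1 * (u - v)) by (apply Rmult_le_compat_r; lra). lra.
Qed.

Lemma F_mono f F A B : Fgood f F A B -> forall u v, A <= u -> u <= v -> v <= B -> F u <= F v.
Proof.
  intros [_ [m [L [Hm HFm]]]] u v ? ? ?. destruct (HFm u v) as [Q1 _]; auto.
  assert (0 <= m * (v - u)) by (apply Rmult_le_pos; lra). lra.
Qed.

Lemma diamond_compact {X : Type} (d : X -> X -> R) (Hd : is_metric d) lo hi f :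
  is_geodesic_space d -> proper_metric d ->
  (forall t, in_I lo hi t -> continuity_pt f t /\ 0 < f t) ->
  forall p q, in_Y lo hi p -> in_Y lo hi q ->
  compact_set (cone_dist d) (diamond d lo hi f p q).
Proof.
  intros Hgeo Hprop Hf [tp xp] [tq xq] Hp Hq. unfold in_Y in Hp, Hq; simpl in Hp, Hq.
  destruct (Rle_dec tp tq) as [Hpq|Hpq]; cycle 1.
  { intros Idx U _ _. exists nil. intros r [_ [H1 H2]].
    apply le_time in H1. apply le_time in H2. simpl in *. lra. }
  destruct (F_exists f tp tq Hpq) as [F HF].
  { intros x Hx. apply Hf. apply in_I_conv with tp tq; auto. }
  destruct (F_lip f F tp tq HF) as [L [HL HLip]].
  assert (HFm := F_mono f F tp tq HF).
  set (S := fun r : R * X => tp <= fst r <= tq /\ d xp (snd r) <= F (fst r) - F tp /\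
                             d (snd r) xq <= F tq - F (fst r)).
  assert (Heq : forall r, diamond d lo hi f (tp, xp) (tq, xq) r <-> S r).
  { intros [tr xr]. split.
    - intros [HY [H1 H2]].
      assert (T1 := le_time d lo hi f _ _ H1). assert (T2 := le_time d lo hi f _ _ H2).
      simpl in T1, T2.
      split. simpl; lra.
      split.
      + apply (le_forward d Hd lo hi f F tp tq _ _ H1 HF); simpl; lra.
      + apply (le_forward d Hd lo hi f F tp tq _ _ H2 HF); simpl; lra.
    - intros [[T1 T2] [H1 H2]]. simpl in *.
      assert (HIr : in_I lo hi tr) by (apply in_I_conv with tp tq; auto).
      assert (Hfp : forall t, in_I lo hi t -> 0 < f t) by (intros; apply Hf; auto).
      split. exact HIr. split.
      + destruct (Req_dec tp tr) as [<-|Hne].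
        * left. f_equal. apply (d_eq d Hd). assert (H := d_nonneg d Hd xp xr). lra.
        * apply (backward d Hd lo hi f F tp tq); auto; lra.
      + destruct (Req_dec tr tq) as [<-|Hne].
        * left. f_equal. apply (d_eq d Hd). assert (H := d_nonneg d Hd xr xq). lra.
        * apply (backward d Hd lo hi f F tp tq); auto; lra. }
  assert (HS : compact_set (cone_dist d) S).
  { apply closed_sub_compact with (K := fun y => tp <= fst y <= tq /\ (fun z => d xp z <= F tq - F tp) (snd y)).
    - exact (prod_compact d Hd tp tq (fun z => d xp z <= F tq - F tp) Hpq (Hprop xp _)).
    - intros [tr xr] [[T1 T2] [H1 H2]]. simpl in *. split. lra.
      assert (F tr <= F tq) by (apply HFm; lra). lra.
    - intros [ty y2] Hn. unfold S in Hn. simpl in Hn.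
      destruct (Rlt_le_dec ty tp) as [Hlt|Hge].
      { exists (tp - ty). split. lra. intros [tz z2] Hz [[T1 T2] _]. simpl in *.
        assert (Hc := cd_fst d Hd (ty, y2) (tz, z2)). simpl in Hc.
        assert (tz - ty <= Rabs (ty - tz)) by (rewrite Rabs_minus_sym; apply Rle_abs). lra. }
      destruct (Rlt_le_dec tq ty) as [Hgt|Hle].
      { exists (ty - tq). split. lra. intros [tz z2] Hz [[T1 T2] _]. simpl in *.
        assert (Hc := cd_fst d Hd (ty, y2) (tz, z2)). simpl in Hc.
        assert (ty - tz <= Rabs (ty - tz)) by apply Rle_abs. lra. }
      assert (Hor : F ty - F tp < d xp y2 \/ F tq - F ty < d y2 xq).
      { destruct (Rlt_le_dec (F ty - F tp) (d xp y2)); [left; auto|].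
        destruct (Rlt_le_dec (F tq - F ty) (d y2 xq)); [right; auto|].
        exfalso; apply Hn; split; [lra|split; auto]. }
      destruct Hor as [Hg|Hg].
      + exists ((d xp y2 - (F ty - F tp)) / (L + 1)). split. apply Rdiv_lt_0_compat; lra.
        intros [tz z2] Hz [[T1 T2] [H1 H2]]. simpl in *.
        assert (Hc1 := cd_fst d Hd (ty, y2) (tz, z2)). assert (Hc2 := cd_snd d (ty, y2) (tz, z2)).
        simpl in Hc1, Hc2.
        assert (Hl := HLip ty tz ltac:(lra) ltac:(lra)).
        rewrite (Rabs_minus_sym tz ty) in Hl.
        assert (Ht := d_tri d Hd xp z2 y2). rewrite (d_sym d Hd z2 y2) in Ht.
        assert (F tz - F ty <= L * Rabs (ty - tz)) by (assert (F tz - F ty <= Rabs (F tz - F ty)) by apply Rle_abs; lra).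
        assert (L * Rabs (ty - tz) + d y2 z2 <= (L + 1) * cone_dist d (ty, y2) (tz, z2)).
        { assert (L * Rabs (ty - tz) <= L * cone_dist d (ty, y2) (tz, z2)) by (apply Rmult_le_compat_l; lra). nra. }
        apply Rmult_lt_compat_l with (r := L + 1) in Hz; [|lra].
        replace ((L + 1) * ((d xp y2 - (F ty - F tp)) / (L + 1))) with (d xp y2 - (F ty - F tp)) in Hz by (field; lra).
        lra.
      + exists ((d y2 xq - (F tq - F ty)) / (L + 1)). split. apply Rdiv_lt_0_compat; lra.
        intros [tz z2] Hz [[T1 T2] [H1 H2]]. simpl in *.
        assert (Hc1 := cd_fst d Hd (ty, y2) (tz, z2)). assert (Hc2 := cd_snd d (ty, y2) (tz, z2)).
        simpl in Hc1, Hc2.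
        assert (Hl := HLip ty tz ltac:(lra) ltac:(lra)).
        rewrite (Rabs_minus_sym tz ty) in Hl.
        assert (Ht := d_tri d Hd y2 z2 xq).
        assert (F ty - F tz <= L * Rabs (ty - tz)) by (assert (F ty - F tz <= Rabs (F tz - F ty)) by (rewrite Rabs_minus_sym; apply Rle_abs); lra).
        assert (L * Rabs (ty - tz) + d y2 z2 <= (L + 1) * cone_dist d (ty, y2) (tz, z2)).
        { assert (L * Rabs (ty - tz) <= L * cone_dist d (ty, y2) (tz, z2)) by (apply Rmult_le_compat_l; lra). nra. }
        apply Rmult_lt_compat_l with (r := L + 1) in Hz; [|lra].
        replace ((L + 1) * ((d y2 xq - (F tq - F ty)) / (L + 1))) with (d y2 xq - (F tq - F ty)) in Hz by (field; lra).
        lra. }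
  intros Idx U HUo HUc. destruct (HS Idx U HUo) as [l Hl].
  { intros x Sx. apply HUc. apply Heq; auto. }
  exists l. intros x Dx. apply Hl. apply Heq; auto.
Qed.

Theorem proposition4p10 (X : Type) (d : X -> X -> R) (lo hi : Rbar) (f : R -> R) :
  is_metric d -> is_length_space d -> is_geodesic_space d -> proper_metric d ->
  Rbar_lt lo hi ->
  (forall t, in_I lo hi t -> continuity_pt f t /\ 0 < f t) ->
  globally_hyperbolic d lo hi f.
Proof.
  intros Hd _ Hgeo Hprop _ Hf. split.
  - apply nti; auto.
  - intros p q Hp Hq. apply diamond_compact; auto.
Qed.
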